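(* Let $b>0$, let $q=2b$ be the reducer capacity, and let $X$ and $Y$ be disjoint lists of inputs, each input of size at most $b$; let $sum_x$ and $sum_y$ be the sums of the sizes of the inputs of $X$ and $Y$, respectively, with $sum_x>q$ and $sum_y>q$. Consider the following algorithm: pack the inputs of $X$ into bins of capacity $b$ and the inputs of $Y$ into bins of capacity $b$, using First-Fit Decreasing (or Best-Fit Decreasing); then, for each pair consisting of an $X$-bin and a $Y$-bin, create one reducer receiving all inputs of both bins. The resulting X2Y mapping schema uses at most $\frac{4\cdot sum_x\cdot sum_y}{b^2}$ reducers and has communication cost at most $\frac{4\cdot sum_x\cdot sum_y}{b}$.
   Context: An X2Y mapping schema for lists $X$ and $Y$ with capacity $q$ is an assignment of the inputs of $X\cup Y$ to a collection of reducers (each input may go to several reducers) such that every reducer receives inputs of total size at most $q$ and for every $x\in X$ and $y\in Y$ there is a reducer receiving both. The communication cost is the sum over reducers of the total size of the inputs assigned to it. *)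

(* Defs.v *)
From mathcomp Require Import all_boot all_order all_algebra.
Set Implicit Arguments. Unset Strict Implicit. Unset Printing Implicit Defensive.
Import Order.TTheory GRing.Theory Num.Theory.
Local Open Scope ring_scope.

Section X2Y.
Variables (R : realFieldType) (I : eqType) (w : I -> R).

Definition load (s : seq I) : R := \sum_(i <- s) w i.

Definition is_X2Y_schema (q : R) (X Y : seq I) (reducers : seq (seq I)) : Prop :=
  (forall r, r \in reducers -> {subset r <= X ++ Y}) /\
  (forall r, r \in reducers -> load r <= q) /\
  (forall x y, x \in X -> y \in Y -> exists2 r, r \in reducers & (x \in r) && (y \in r)).

Definition num_reducers (reducers : seq (seq I)) : nat := size reducers.

Definition comm_cost (reducers : seq (seq I)) : R := \sum_(r <- reducers) load r.

Variable b : R.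

Fixpoint ff_insert (x : I) (bins : seq (seq I)) : seq (seq I) :=
  match bins with
  | [::] => [:: [:: x]]
  | B :: bs => if load B + w x <= b then rcons B x :: bs else B :: ff_insert x bs
  end.

(* Best-Fit insertion: put x in a fullest bin where it fits (the first such one
   in case of ties), else open a new bin. *)
Definition bf_insert (x : I) (bins : seq (seq I)) : seq (seq I) :=
  let fits := [seq i <- iota 0 (size bins) | load (nth [::] bins i) + w x <= b] in
  match fits with
  | [::] => rcons bins [:: x]
  | j0 :: js =>
      let j := foldl (fun j i => if load (nth [::] bins j) < load (nth [::] bins i)
                                 then i else j) j0 js in
      set_nth [::] bins j (rcons (nth [::] bins j) x)
  end.

Definition decreasing_order (s : seq I) : seq I := sort (fun x y => w y <= w x) s.

Definition pack_decreasing (best : bool) (s : seq I) : seq (seq I) :=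
  foldl (fun bins x => if best then bf_insert x bins else ff_insert x bins)
        [::] (decreasing_order s).

Definition bin_pair_schema (bestX bestY : bool) (X Y : seq I) : seq (seq I) :=
  [seq BX ++ BY | BX <- pack_decreasing bestX X, BY <- pack_decreasing bestY Y].

End X2Y.

(* Main.v *)
Require Import Defs.
From mathcomp Require Import all_boot all_order all_algebra.
From mathcomp Require Import ring lra zify.
Import Order.TTheory GRing.Theory Num.Theory.
Local Open Scope ring_scope.

Section Aux.
Variables (R : realFieldType) (I : eqType) (w : I -> R) (b : R).

Definition shape (x : I) (bins nw : seq (seq I)) : Prop :=
  (nw = rcons bins [:: x] /\ all (fun C => b < load w C + w x) bins) \/
  exists s1 B s2, bins = s1 ++ B :: s2 /\ nw = s1 ++ rcons B x :: s2 /\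
                  load w B + w x <= b.

Lemma ff_shape x bins : shape x bins (ff_insert w b x bins).
Proof.
elim: bins => [|C cs IH] /=; first by left.
case: ifP => H.
  by right; exists [::], C, cs.
case: IH => [[-> Hall]|[s1 [B [s2 [E1 [E2 HB]]]]]].
  by left; split => //=; rewrite Hall andbT ltNge H.
by right; exists (C :: s1), B, s2; rewrite E2 E1.
Qed.

Lemma foldl_mem (f : nat -> nat -> nat) :
  (forall a c, f a c = a \/ f a c = c) ->
  forall js j0, foldl f j0 js \in j0 :: js.
Proof.
move=> Hf; elim=> [|c cs IH] j0 /=; first by rewrite inE.
have := IH (f j0 c); rewrite inE => /orP [/eqP ->|H].
  by case: (Hf j0 c) => ->; rewrite !inE eqxx ?orbT.
by rewrite !inE H !orbT.
Qed.

Lemma bf_shape x bins : shape x bins (bf_insert w b x bins).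
Proof.
rewrite /bf_insert.
set P := fun i => load w (nth [::] bins i) + w x <= b.
case E: [seq i <- iota 0 (size bins) | P i] => [|j0 js].
  left; split => //; apply/allP => C HC; rewrite ltNge; apply/negP => H.
  have : has P (iota 0 (size bins)).
    apply/hasP; exists (index C bins); first by rewrite mem_iota add0n index_mem.
    by rewrite /P nth_index.
  by rewrite has_filter E.
set j := foldl _ j0 js.
have : j \in [seq i <- iota 0 (size bins) | P i].
  rewrite E; apply: foldl_mem => a c; case: ifP; by [right|left].
rewrite mem_filter mem_iota add0n /= => /andP [Pj Hj].
right; exists (take j bins), (nth [::] bins j), (drop j.+1 bins).
split; first by rewrite -drop_nth // cat_take_drop.
by rewrite set_nthE Hj.
Qed.

Lemma load_cat s t : load w (s ++ t) = load w s + load w t.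
Proof. by rewrite /load big_cat. Qed.

Lemma load_rcons B x : load w (rcons B x) = load w B + w x.
Proof. by rewrite -cats1 load_cat /load big_seq1. Qed.

Definition rr (B C : seq I) : bool := b < load w B + load w C.

Definition Inv (bins : seq (seq I)) (p : seq I) : Prop :=
  perm_eq (flatten bins) p /\ all (fun B => load w B <= b) bins /\ pairwise rr bins.

Lemma inv_step x bins nw p : shape x bins nw -> 0 < w x -> w x <= b ->
  Inv bins p -> Inv nw (rcons p x).
Proof.
move=> Hs wx0 wxb [Hp [Ha Hpw]].
case: Hs => [[-> Hall]|[s1 [B [s2 [E1 [E2 HB]]]]]].
  split; first by rewrite flatten_rcons -cats1 perm_cat2r.
  split; first by rewrite all_rcons /= /load big_seq1 wxb.
  rewrite -cats1 pairwise_cat allrel1r Hpw /= andbT.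
  by apply: sub_all Hall => C; rewrite /rr /load big_seq1.
subst bins nw.
split.
  move/permP: Hp => Hp; apply/permP => a; rewrite -[rcons p x]cats1 count_cat -Hp.
  rewrite !flatten_cat /= -cats1 !count_cat /=; lia.
split.
  move: Ha; rewrite !all_cat /= load_rcons HB => /andP [-> /andP [_ ->]].
  done.
have m1 C : rr C B -> rr C (rcons B x).
  by rewrite /rr load_rcons => H; lra.
have m2 C : rr B C -> rr (rcons B x) C.
  by rewrite /rr load_rcons => H; lra.
move: Hpw; rewrite !pairwise_cat !allrel_consr /= => /and4P [/andP [H1 H2] H3 H4 H5].
rewrite H2 H3 H5 /= andbT; rewrite andbT; apply/andP; split.
  by apply: sub_all H1.
by apply: sub_all H4.
Qed.

Lemma pack_inv best s : (forall i, i \in s -> 0 < w i /\ w i <= b) ->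
  Inv (pack_decreasing w b best s) s.
Proof.
move=> Hw.
have gen : forall l bins p, (forall i, i \in l -> 0 < w i /\ w i <= b) ->
    Inv bins p ->
    Inv (foldl (fun bins x => if best then bf_insert w b x bins
                              else ff_insert w b x bins) bins l) (p ++ l).
  elim=> [|x l IH] bins p Hl Hi /=; first by rewrite cats0.
  rewrite -cat_rcons; apply: IH.
    by move=> i Hi'; apply: Hl; rewrite inE Hi' orbT.
  have [h1 h2] := Hl x (mem_head _ _).
  apply: inv_step h1 h2 Hi.
  by case: best; [apply: bf_shape|apply: ff_shape].
have := gen (decreasing_order w s) [::] [::].
case=> //.
  by move=> i; rewrite /decreasing_order mem_sort; apply: Hw.
move=> Hp Hr; split=> //.
by apply: perm_trans Hp _; rewrite /decreasing_order /= perm_sort.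
Qed.

Lemma all_rr_bound C cs : all (rr C) cs ->
  (size cs)%:R * b <= (size cs)%:R * load w C + \sum_(D <- cs) load w D.
Proof.
elim: cs => [|D ds IH] /=; first by rewrite big_nil !mul0r addr0.
move=> /andP [H1 H2]; have := IH H2; move: H1; rewrite /rr big_cons -!(addn1 (size ds)) natrD.
move=> H1 H3; nra.
Qed.

Lemma pairwise_bound bins : pairwise rr bins ->
  (size bins)%:R * ((size bins)%:R - 1) * b <=
  2 * ((size bins)%:R - 1) * \sum_(B <- bins) load w B.
Proof.
elim: bins => [|C cs IH] /=; first by rewrite big_nil !mul0r mulr0.
move=> /andP [H1 H2]; have := IH H2; have := @all_rr_bound C cs H1.
rewrite big_cons -(addn1 (size cs)) natrD addrK.
move=> A1 A2; nra.
Qed.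

Lemma count_bound bins S : pairwise rr bins -> 0 < b -> 2 * b < S ->
  \sum_(B <- bins) load w B = S -> (size bins)%:R * b <= 2 * S.
Proof.
move=> Hp b0 HS HE; have := @pairwise_bound bins Hp; rewrite HE.
have [n2|] := leqP 2 (size bins).
  have n2' : 2 <= (size bins)%:R :> R by rewrite (ler_nat R 2).
  move=> H; nra.
move=> nl _; have : (size bins)%:R <= 1 :> R by rewrite (ler_nat R _ 1) -ltnS.
move=> H; nra.
Qed.
End Aux.
Arguments Inv {R I}.
Arguments rr {R I}.
Arguments load_cat {R I}.
Arguments pack_inv {R I w b}.
Arguments count_bound {R I w b bins S}.

Lemma sum_const_seq (R : realFieldType) (T : Type) (s : seq T) (c : R) :
  \sum_(i <- s) c = (size s)%:R * c.
Proof.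
elim: s => [|x s IH]; first by rewrite big_nil mul0r.
by rewrite big_cons IH /= -(addn1 (size s)) natrD mulrDl mul1r addrC.
Qed.
Arguments sum_const_seq {R T}.

Theorem theorem15 (R : realFieldType) (I : eqType) (w : I -> R) (b : R)
    (X Y : seq I) (bestX bestY : bool) :
  0 < b ->
  uniq X -> uniq Y -> [seq x <- X | x \in Y] = [::] ->
  (forall i, i \in X ++ Y -> 0 < w i /\ w i <= b) ->
  load w X > 2 * b -> load w Y > 2 * b ->
  let q := 2 * b in
  let reducers := bin_pair_schema w b bestX bestY X Y in
  is_X2Y_schema w q X Y reducers /\
  (num_reducers reducers)%:R <= 4 * load w X * load w Y / b ^+ 2 /\
  comm_cost w reducers <= 4 * load w X * load w Y / b.
Proof.
move=> b0 _ _ _ Hw HX HY q reducers.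
set PX := pack_decreasing w b bestX X.
set PY := pack_decreasing w b bestY Y.
have [pX [aX rX]] : Inv w b PX X.
  by apply: pack_inv => i Hi; apply: Hw; rewrite mem_cat Hi.
have [pY [aY rY]] : Inv w b PY Y.
  by apply: pack_inv => i Hi; apply: Hw; rewrite mem_cat Hi orbT.
have sX : \sum_(B <- PX) load w B = load w X.
  by rewrite /load -big_flatten /= (perm_big _ pX).
have sY : \sum_(B <- PY) load w B = load w Y.
  by rewrite /load -big_flatten /= (perm_big _ pY).
have nX := count_bound rX b0 HX sX.
have nY := count_bound rY b0 HY sY.
have Er : reducers = [seq BX ++ BY | BX <- PX, BY <- PY] by [].
split.
  split.
    rewrite Er => r /allpairsP [[BX BY] [/= hX hY ->]] z.
    rewrite !mem_cat => /orP [hz|hz]; apply/orP; [left|right].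
      by rewrite -(perm_mem pX); apply/flattenP; exists BX.
    by rewrite -(perm_mem pY); apply/flattenP; exists BY.
  split.
    rewrite Er => r /allpairsP [[BX BY] [/= hX hY ->]].
    rewrite load_cat /q.
    have := allP aX _ hX; have := allP aY _ hY => /= h1 h2; lra.
  move=> x y; rewrite -(perm_mem pX) -(perm_mem pY).
  move=> /flattenP [BX hX xX] /flattenP [BY hY yY].
  exists (BX ++ BY); first by rewrite Er; apply/allpairsP; exists (BX, BY).
  by rewrite !mem_cat xX yY orbT.
have n0 : 0 <= (size PX)%:R :> R by [].
have m0 : 0 <= (size PY)%:R :> R by [].
split.
  rewrite /num_reducers Er size_allpairs natrM ler_pdivlMr ?exprn_gt0 //.
  have := ler_pM (mulr_ge0 n0 (ltW b0)) (mulr_ge0 m0 (ltW b0)) nX nY.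
  rewrite expr2 => H; nra.
rewrite /comm_cost Er big_allpairs_dep /=.
under eq_bigr do under eq_bigr do rewrite load_cat.
under eq_bigr do rewrite big_split /= sum_const_seq sY.
rewrite big_split /= -big_distrr /= sX sum_const_seq.
rewrite ler_pdivlMr //.
nra.
Qed.
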